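(* Let $L=\bigoplus_{i\in\mathbb{Z}/n\mathbb{Z}}L_i$ be a $(\mathbb{Z}/n\mathbb{Z})$-graded Lie algebra and let $T$ be a homogeneous ideal of $L$ that has only $e$ non-trivial components $T\cap L_i$. Then at most $e^2$ of the components $L_i$ of $L$ do not centralize $T$ (i.e. satisfy $[L_i,T]\neq 0$).
   Context: A $(\mathbb{Z}/n\mathbb{Z})$-graded Lie algebra is $L=\bigoplus_{i=0}^{n-1}L_i$ with $[L_i,L_j]\subseteq L_{i+j \bmod n}$. A subspace $T$ is homogeneous if $T=\bigoplus_i (T\cap L_i)$. *)

(* Defs.v *)
From mathcomp Require Import all_boot all_order all_algebra.
Set Implicit Arguments. Unset Strict Implicit. Unset Printing Implicit Defensive.
Import GRing.Theory.
Local Open Scope ring_scope.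

Section LieDefs.
Variables (K : fieldType) (V : lmodType K).

Definition is_lie_bracket (br : V -> V -> V) : Prop :=
  [/\ (forall a x y z, br (a *: x + y) z = a *: br x z + br y z),
      (forall a x y z, br z (a *: x + y) = a *: br z x + br z y),
      (forall x, br x x = 0) &
      (forall x y z, br x (br y z) + br y (br z x) + br z (br x y) = 0)].

Definition is_subspace (S : V -> Prop) : Prop :=
  [/\ S 0, (forall x y, S x -> S y -> S (x + y)) &
      (forall a x, S x -> S (a *: x))].

(* (Z/mZ)-grading, m = n.+1, indices 'I_n.+1 with addition mod n.+1:
   V = (+)_i Lc i as a direct sum of subspaces, and [Lc i, Lc j] <= Lc (i+j). *)
Definition is_Zn_grading (n : nat) (br : V -> V -> V) (Lc : 'I_n.+1 -> V -> Prop)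
  : Prop :=
  [/\ (forall i, is_subspace (Lc i)),
      (forall v, exists f : 'I_n.+1 -> V,
          (forall i, Lc i (f i)) /\ v = \sum_i f i),
      (forall f : 'I_n.+1 -> V, (forall i, Lc i (f i)) ->
          \sum_i f i = 0 -> forall i, f i = 0) &
      (forall i j x y, Lc i x -> Lc j y -> Lc (i + j)%R (br x y))].

Definition is_homogeneous (n : nat) (Lc : 'I_n.+1 -> V -> Prop) (T : V -> Prop)
  : Prop :=
  is_subspace T /\
  forall v, T v -> exists f : 'I_n.+1 -> V,
      (forall i, Lc i (f i) /\ T (f i)) /\ v = \sum_i f i.

Definition is_ideal (br : V -> V -> V) (T : V -> Prop) : Prop :=
  is_subspace T /\ forall x t, T t -> T (br x t).

End LieDefs.

(* Main.v *)
Require Import Defs.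
From mathcomp Require Import all_boot all_order all_algebra.
Import GRing.Theory.
Local Open Scope ring_scope.

Theorem lemma7 (K : fieldType) (V : lmodType K) (br : V -> V -> V) (n : nat)
  (Lc : 'I_n.+1 -> V -> Prop) (T : V -> Prop)
  (S C : {set 'I_n.+1}) (e : nat) :
  is_lie_bracket br ->
  is_Zn_grading br Lc ->
  is_homogeneous Lc T ->
  is_ideal br T ->
  (forall i, i \in S <-> exists t, T t /\ Lc i t /\ t <> 0) ->
  #|S| = e ->
  (forall i, i \in C <-> exists x t, Lc i x /\ T t /\ br x t <> 0) ->
  (#|C| <= e ^ 2)%N.
Proof.
move=> [_ linR _ _] [_ _ _ grM] [_ homT] [_ idT] HS <- HC.
have br0 : forall z, br z 0 = 0.
  move=> z; have := linR 1 0 0 z; rewrite !scale1r addr0 => E.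
  by apply: (addrI (br z 0)); rewrite addr0 -E.
have brsum : forall z (f : 'I_n.+1 -> V), br z (\sum_i f i) = \sum_i br z (f i).
  move=> z f; elim/big_rec2: _ => [|i y1 y2 _ <-]; first exact: br0.
  by rewrite -{1}(scale1r (f i)) linR scale1r.
have sub : C \subset [set p.1 - p.2 | p in setX S S].
  apply/subsetP => i /HC [x [t [Lx [Tt nz]]]].
  have [f [Hf Et]] := homT t Tt.
  rewrite Et brsum in nz.
  have [j /eqP nzj] : exists j, br x (f j) != 0.
    apply/existsP; apply: contraT; rewrite negb_exists => /forallP H.
    exfalso; apply: nz; apply: big1 => j _; apply/eqP; exact: negbNE (H j).
  have jS : j \in S.
    apply/HS; exists (f j); split; first exact: (Hf j).2.
    by split; [exact: (Hf j).1 | move=> E; apply: nzj; rewrite E br0].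
  have ijS : (i + j)%R \in S.
    apply/HS; exists (br x (f j)); split; first exact: idT (Hf j).2.
    by split; [exact: grM Lx (Hf j).1 | done].
  apply/imsetP; exists (i + j, j)%R; first by rewrite in_setX ijS jS.
  by apply/esym; apply: (addrK j i).
apply: (leq_trans (subset_leq_card sub)).
by rewrite (leq_trans (leq_imset_card _ _)) // cardsX expnS expn1.
Qed.
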